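(* Let $(\mathfrak{h},[\cdot,\cdot])$ be a finite-dimensional real left Leibniz algebra with $H^0(\mathfrak{h})=H^1(\mathfrak{h})=0$. Let $(A_{n,1})_{n\ge0}$ be a sequence with $A_{0,1}(x,y)=y$, $A_{1,1}(x,y)=[x,y]$, and for each $n\ge2$, $A_{n,1}:\mathfrak{h}^{n+1}\to\mathfrak{h}$ multilinear, invariant, and symmetric in its first $n$ arguments. Writing $A_{p,1}(x,y)=A_{p,1}(x,\ldots,x,y)$, assume that for all $p\ge1$ and all $x,y,z\in\mathfrak{h}$, \[A_{p,1}(x,[y,z])=[y,A_{p,1}(x,z)]+[A_{p,1}(x,y),z]+\sum_{r=1}^{p-1}[A_{r,1}(x,y),A_{p-r,1}(x,z)].\] Then there exists a unique sequence $(B_n)_{n\ge2}$ of invariant symmetric multilinear maps $B_n:\mathfrak{h}^n\to\mathfrak{h}$ such that for every $n\ge2$ and all $x,y\in\mathfrak{h}$, \[A_{n,1}(x,y)=A^0_{n,1}(x,y)+\sum_{k=1}^{[n/2]}\ \sum_{\substack{(l_1,\ldots,l_k),\ l_i\ge2\\ s=l_1+\cdots+l_k\le n}}A^0_{k,1}\big(B_{l_1}(x),\ldots,B_{l_k}(x),A^0_{n-s,1}(x,y)\big),\] where $B_l(x)=B_l(x,\ldots,x)$ and the inner sum is over ordered tuples.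
   Context: Left Leibniz algebra: bilinear bracket with $[u,[v,w]]=[[u,v],w]+[v,[u,w]]$; $\mathrm{ad}_x(y)=[x,y]$. $H^0(\mathfrak{h})=\{x\in\mathfrak{h}:[x,m]=0\ \forall m\in\mathfrak{h}\}$. $H^1(\mathfrak{h})$ is the quotient of the space of linear maps $F:\mathfrak{h}\to\mathfrak{h}$ with $F([y,z])=[y,F(z)]+[F(y),z]$ for all $y,z$, by the subspace $\{\mathrm{ad}_x:x\in\mathfrak{h}\}$. A multilinear map $A:\mathfrak{h}^{m}\to\mathfrak{h}$ is invariant if $[x,A(y_1,\ldots,y_m)]=\sum_{i=1}^mA(y_1,\ldots,[x,y_i],\ldots,y_m)$ for all $x,y_1,\ldots,y_m$. The maps $A^0_{k,1}$ are defined by $A^0_{0,1}(x,y)=y$ and $A^0_{k,1}(x_1,\ldots,x_k,y)=\frac{1}{(k!)^2}\sum_{\sigma\in S_k}\mathrm{ad}_{x_{\sigma(1)}}\circ\cdots\circ\mathrm{ad}_{x_{\sigma(k)}}(y)$ for $k\ge1$, with $A^0_{k,1}(x,y)=A^0_{k,1}(x,\ldots,x,y)$. *)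

(* Defs.v *)
From HB Require Import structures.
From mathcomp Require Import all_boot all_order all_fingroup all_algebra.
From mathcomp Require Import reals.
Set Implicit Arguments. Unset Strict Implicit. Unset Printing Implicit Defensive.
Import Order.TTheory GRing.Theory Num.Theory.
Local Open Scope ring_scope.

Section Defs.
Variables (R : realType) (h : vectType R).
Variable br : h -> h -> h.

Definition upd (m : nat) (t : 'I_m -> h) (i : 'I_m) (v : h) : 'I_m -> h :=
  fun j => if j == i then v else t j.

Definition left_leibniz : Prop :=
  [/\ forall (a : R) u v w, br (a *: u + v) w = a *: br u w + br v w,
      forall (a : R) u v w, br u (a *: v + w) = a *: br u v + br u w
    & forall u v w, br u (br v w) = br (br u v) w + br v (br u w)].

Definition H0_trivial : Prop :=
  forall x : h, (forall m, br x m = 0) -> x = 0.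

Definition H1_trivial : Prop :=
  forall F : h -> h,
    (forall (a : R) u v, F (a *: u + v) = a *: F u + F v) ->
    (forall y z, F (br y z) = br y (F z) + br (F y) z) ->
    exists x : h, forall y, F y = br x y.

Definition is_multilinear (m : nat) (f : ('I_m -> h) -> h) : Prop :=
  forall (t : 'I_m -> h) (i : 'I_m) (a : R) (u v : h),
    f (upd t i (a *: u + v)) = a *: f (upd t i u) + f (upd t i v).

Definition is_symmetric (m : nat) (f : ('I_m -> h) -> h) : Prop :=
  forall (t : 'I_m -> h) (s : 'S_m), f (t \o s) = f t.

Definition is_invariant (m : nat) (f : ('I_m -> h) -> h) : Prop :=
  forall (x : h) (t : 'I_m -> h),
    br x (f t) = \sum_(i < m) f (upd t i (br x (t i))).

(* Maps h^{n+1} -> h written as  A xs y  with xs : 'I_n -> h (first n args), y the last *)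
Definition is_multilinear1 (n : nat) (A : ('I_n -> h) -> h -> h) : Prop :=
  (forall y, is_multilinear (fun xs => A xs y)) /\
  (forall xs (a : R) u v, A xs (a *: u + v) = a *: A xs u + A xs v).

Definition is_symmetric1 (n : nat) (A : ('I_n -> h) -> h -> h) : Prop :=
  forall y, is_symmetric (fun xs => A xs y).

Definition is_invariant1 (n : nat) (A : ('I_n -> h) -> h -> h) : Prop :=
  forall (x : h) (xs : 'I_n -> h) (y : h),
    br x (A xs y) = \sum_(i < n) A (upd xs i (br x (xs i))) y + A xs (br x y).

Definition cst (m : nat) (x : h) : 'I_m -> h := fun _ => x.

Definition A0 (k : nat) (xs : 'I_k -> h) (y : h) : h :=
  ((k`! ^ 2)%N%:R : R)^-1 *:
    \sum_(s : 'S_k) foldr (fun i acc => br (xs (s i)) acc) y (enum 'I_k).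

End Defs.

Arguments cst {R h} m x _.
Arguments A0 {R h} br k xs y.

(* Main.v *)
Require Import Defs.
From HB Require Import structures.
From mathcomp Require Import all_boot all_order all_fingroup all_algebra.
From mathcomp Require Import reals.
From mathcomp Require Import zify.
From Stdlib Require Import FunctionalExtensionality ClassicalEpsilon.
Set Implicit Arguments. Unset Strict Implicit. Unset Printing Implicit Defensive.
Import Order.TTheory GRing.Theory Num.Theory.
Local Open Scope ring_scope.
Section P1.
Variables (R : realType) (h : vectType R).

Lemma polyvanish (N : nat) (a : nat -> h) :
  (forall c : R, \sum_(k < N) c ^+ k *: a k = 0) -> forall k, (k < N)%N -> a k = 0.
Proof.
move=> H k kN.
rewrite (coord_vbasis (memvf (a k))).
apply: big1 => i _.
pose p : {poly R} := \poly_(j < N) coord (vbasis fullv) i (a j).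
have p0 : p = 0.
  apply: (@roots_geq_poly_eq0 _ _ [seq j%:R | j <- iota 0 N]).
  - apply/allP => c _; rewrite /root horner_poly.
    have := H c => /(congr1 (coord (vbasis fullv) i)); rewrite linear0 linear_sum /= => E.
    apply/eqP; apply: etrans E; apply: eq_bigr => j _; rewrite linearZ /= mulrC //.
  - rewrite map_inj_uniq ?iota_uniq //; move=> x y /eqP; rewrite eqr_nat => /eqP //.
  - by rewrite size_map size_iota size_poly.
have := congr1 (fun q : {poly R} => q`_k) p0.
rewrite coef_poly kN coef0 => ->; by rewrite scale0r.
Qed.
End P1.
Section P2.
Variables (R : realType) (h : vectType R).

Definition mix (m : nat) (T : {set 'I_m}) (f zs : 'I_m -> h) : 'I_m -> h :=
  fun i => if i \in T then f i else zs i.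

Lemma expand (m : nat) (H : ('I_m -> h) -> h) (v w : h) :
  is_multilinear H ->
  forall (T : {set 'I_m}) (zs : 'I_m -> h), exists a : nat -> h,
   [/\ (forall k, (#|T| < k)%N -> a k = 0),
       (forall c : R, H (mix T (fun _ => v + c *: w) zs) = \sum_(k < #|T|.+1) c ^+ k *: a k),
       a 0%N = H (mix T (fun _ => v) zs) &
       a 1%N = \sum_(i in T) H (fun i' => if i' == i then w else mix T (fun _ => v) zs i')].
Proof.
move=> HM T.
move: {2}#|T| (erefl #|T|) => n; elim: n T => [|n IH] T cT zs.
  have T0 : T = set0 by apply/cards0_eq.
  have mix0 : forall f, mix T f zs = zs.
    by move=> f; apply: functional_extensionality => i; rewrite /mix T0 in_set0.
  exists (fun k => if k is 0%N then H zs else 0); split.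
  - by rewrite cT; case.
  - by move=> c; rewrite mix0 cT big_ord1 expr0 scale1r.
  - by rewrite mix0.
  - by rewrite T0 big_set0.
have : (0 < #|T|)%N by rewrite cT.
case/card_gt0P => p pT.
pose T' := T :\ p.
have cT' : #|T'| = n by move: cT; rewrite (cardsD1 p T) pT add1n => -[].
have pT' : p \notin T' by rewrite /T' in_setD1 eqxx.
have split1 : forall f zs', mix T f zs' = upd (mix T' f zs') p (f p).
  move=> f zs'; apply: functional_extensionality => i; rewrite /mix /upd /T' in_setD1.
  by case: (i =P p) => [->|/eqP ne] /=; rewrite ?pT ?ne.
have split2 : forall f zs' u, upd (mix T' f zs') p u = mix T' f (upd zs' p u).
  move=> f zs' u; apply: functional_extensionality => i; rewrite /mix /upd.
  by case: (i =P p) => [->|/eqP ne] /=; rewrite ?(negbTE pT').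
have [a1 [a1v a1p a10 a11]] := IH T' cT' (upd zs p w).
have [a2 [a2v a2p a20 a21]] := IH T' cT' (upd zs p v).
exists (fun k => (if k is k'.+1 then a1 k' else 0) + a2 k); split.
- move=> [|k] //= Hk.
  rewrite cT in Hk; have h1 : (n < k)%N by [].
  by rewrite a1v ?cT' // a2v ?cT' ?addr0 //; apply: ltnW.
- move=> c; rewrite split1 (addrC v (c *: w)) HM !split2 (addrC (c *: w) v).
  rewrite !a1p !a2p cT -cT'.
  rewrite (eq_bigr (fun k : 'I_#|T'|.+2 => c ^+ k *: (if (k : nat) is k'.+1 then a1 k' else 0) + c ^+ k *: a2 k));
    last by move=> k _; rewrite scalerDr.
  symmetry; rewrite big_split /= big_ord_recl /= scaler0 add0r [X in _ + X]big_ord_recr /=.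
  rewrite a2v ?cT' // scaler0 addr0; congr (_ + _); rewrite scaler_sumr; apply: eq_bigr => k _.
  by rewrite /bump /= add1n exprS scalerA.
- by rewrite /= add0r a20 split1 split2.
- rewrite /= a10 a21 [RHS](bigD1 p) //=; congr (_ + _).
    congr (H _); apply: functional_extensionality => i; rewrite /mix /upd /T' in_setD1.
    by case: eqP => [->|] //=; rewrite ?eqxx.
  rewrite /T'; apply: eq_big => [i|i Hi]; first by rewrite in_setD1 andbC.
  congr (H _); apply: functional_extensionality => i'; rewrite /mix /upd in_setD1.
  case: (i' =P i) => // /eqP ne; case: (i' =P p) => [->|] //=.
  by rewrite pT.
Qed.

Lemma PV (m : nat) (F : ('I_m -> h) -> h) :
  is_multilinear F -> is_symmetric F -> (forall x, F (cst m x) = 0) ->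
  forall xs, F xs = 0.
Proof.
move=> FM FS F0.
have Q : forall j, (j <= m)%N -> forall xs v, F (fun i => if (i < j)%N then xs i else v) = 0.
  elim=> [|j IH] jm xs v.
    by rewrite -(F0 v); congr (F _).
  have jm' : (j < m)%N by [].
  pose p : 'I_m := Ordinal jm'.
  pose T := [set i : 'I_m | (j <= i)%N].
  pose zs := fun i : 'I_m => if (i < j)%N then xs i else v.
  have pT : p \in T by rewrite inE.
  have [a [av ap a0 a1]] := expand v (xs p) FM T zs.
  have Hp : forall c : R, \sum_(k < #|T|.+1) c ^+ k *: a k = 0.
    move=> c; rewrite -ap -(IH (ltnW jm) xs (v + c *: xs p)); congr (F _).
    apply: functional_extensionality => i; rewrite /mix /zs inE.
    by case: ltnP.
  have := polyvanish Hp (k := 1%N); rewrite ltnS card_gt0; have -> : T != set0.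
    by apply/set0Pn; exists p.
  move=> /(_ isT); rewrite a1.
  pose fp := fun i' => if i' == p then xs p else mix T (fun=> v) zs i'.
  rewrite (eq_bigr (fun _ => F fp)); last first.
    move=> i iT; rewrite -(FS _ (tperm i p)); congr (F _).
    apply: functional_extensionality => i'; rewrite /fp /mix /=.
    case: tpermP => [->|->|ne1 ne2]; rewrite ?eqxx ?iT ?pT //; first by rewrite eq_sym.
    by move/eqP/negbTE: ne1 => ->; move/eqP/negbTE: ne2 => ->.
  rewrite big_const iter_addr addr0 => /eqP; rewrite -scaler_nat scaler_eq0 pnatr_eq0.
  have -> : (#|T| == 0%N) = false by apply/negbTE; rewrite -lt0n card_gt0; apply/set0Pn; exists p.
  move=> /= /eqP <-; congr (F _); apply: functional_extensionality => i.
  rewrite /fp /mix /zs inE ltnS leq_eqVlt.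
  case: (i =P p) => [->|ne]; first by rewrite eqxx.
  have -> : (i == j :> nat) = false by apply/negP => /eqP E; apply: ne; apply: val_inj.
  by rewrite /=; case: ltnP.
move=> xs; rewrite -(Q m (leqnn m) xs 0); congr (F _).
by apply: functional_extensionality => i; rewrite ltn_ord.
Qed.
End P2.
Section P3.
Variables (R : realType) (h : vectType R) (br : h -> h -> h).
Hypothesis HL : left_leibniz br.

Lemma brDZl a u v w : br (a *: u + v) w = a *: br u w + br v w.
Proof. by case: HL. Qed.
Lemma brDZr a u v w : br u (a *: v + w) = a *: br u v + br u w.
Proof. by case: HL. Qed.
Lemma brJ u v w : br u (br v w) = br (br u v) w + br v (br u w).
Proof. by case: HL. Qed.

Definition islin (f : h -> h) := forall (a : R) u v, f (a *: u + v) = a *: f u + f v.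

Lemma lin0 f : islin f -> f 0 = 0.
Proof.
move=> H; have := H 1 0 0; rewrite !scale1r addr0 => E.
by apply: (@addrI _ (f 0)); rewrite addr0 -E.
Qed.
Lemma linD f : islin f -> forall u v, f (u + v) = f u + f v.
Proof. by move=> H u v; have := H 1 u v; rewrite !scale1r. Qed.
Lemma linZ f : islin f -> forall a u, f (a *: u) = a *: f u.
Proof. by move=> H a u; rewrite -[a *: u]addr0 H lin0 // addr0. Qed.
Lemma linN f : islin f -> forall u, f (- u) = - f u.
Proof. by move=> H u; rewrite -scaleN1r linZ // scaleN1r. Qed.
Lemma linB f : islin f -> forall u v, f (u - v) = f u - f v.
Proof. by move=> H u v; rewrite linD // linN. Qed.
Lemma linS f : islin f -> forall I (r : seq I) (P : pred I) (F : I -> h),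
  f (\sum_(i <- r | P i) F i) = \sum_(i <- r | P i) f (F i).
Proof.
move=> H I r P F; elim: r => [|x r IH]; first by rewrite !big_nil lin0.
by rewrite !big_cons; case: (P x); rewrite ?linD // IH.
Qed.

Lemma brl_lin w : islin (br^~ w). Proof. by move=> a u v; apply: brDZl. Qed.
Lemma brr_lin u : islin (br u). Proof. by move=> a v w; apply: brDZr. Qed.

Definition brDl w := linD (brl_lin w).
Definition brDr u := linD (brr_lin u).
Definition brZl w := linZ (brl_lin w).
Definition brZr u := linZ (brr_lin u).
Definition brNl w := linN (brl_lin w).
Definition brNr u := linN (brr_lin u).
Definition brBl w := linB (brl_lin w).
Definition brBr u := linB (brr_lin u).
Definition brsuml w := linS (brl_lin w).
Definition brsumr u := linS (brr_lin u).
Lemma br0l w : br 0 w = 0. Proof. exact: (lin0 (brl_lin w)). Qed.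
Lemma br0r u : br u 0 = 0. Proof. exact: (lin0 (brr_lin u)). Qed.

Definition Pm (n : nat) (g : h -> h -> h) :=
  exists D : ('I_n -> h) -> h -> h,
    [/\ is_multilinear1 D, is_invariant1 br D & forall x y, g x y = D (cst n x) y].

Lemma P_ext n g g' : (forall x y, g x y = g' x y) -> Pm n g -> Pm n g'.
Proof. by move=> E [D [D1 D2 D3]]; exists D; split => // x y; rewrite -E. Qed.

Lemma P_zero n : Pm n (fun _ _ => 0).
Proof.
exists (fun _ _ => 0); split => //.
- split=> [y t i a u v|xs a u v]; by rewrite scaler0 addr0.
- by move=> x xs y; rewrite br0r big1 // addr0.
Qed.

Lemma P_addZ n (a : R) g1 g2 : Pm n g1 -> Pm n g2 -> Pm n (fun x y => a *: g1 x y + g2 x y).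
Proof.
move=> [D [[D1a D1b] D2 D3]] [E [[E1a E1b] E2 E3]].
exists (fun xs y => a *: D xs y + E xs y); split.
- split.
  + move=> y t i b u v /=; rewrite D1a E1a.
    by rewrite scalerDr scalerA mulrC -scalerA !scalerDr -!addrA; congr (_ + _); rewrite addrCA.
  + move=> xs b u v; rewrite D1b E1b.
    by rewrite scalerDr scalerA mulrC -scalerA !scalerDr -!addrA; congr (_ + _); rewrite addrCA.
- by move=> x xs y; rewrite brDr brZr D2 E2 scalerDr scaler_sumr big_split /= addrACA.
- by move=> x y; rewrite D3 E3.
Qed.

Lemma P_add n g1 g2 : Pm n g1 -> Pm n g2 -> Pm n (fun x y => g1 x y + g2 x y).
Proof. by move=> P1 P2; apply: P_ext (P_addZ 1 P1 P2) => x y; rewrite scale1r. Qed.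
Lemma P_scale n (a : R) g : Pm n g -> Pm n (fun x y => a *: g x y).
Proof. by move=> P1; apply: P_ext (P_addZ a P1 (P_zero n)) => x y; rewrite addr0. Qed.
Lemma P_sub n g1 g2 : Pm n g1 -> Pm n g2 -> Pm n (fun x y => g1 x y - g2 x y).
Proof. by move=> P1 P2; apply: P_ext (P_addZ (-1) P2 P1) => x y; rewrite scaleN1r addrC. Qed.
Lemma P_sum n I (r : seq I) (Q : pred I) (G : I -> h -> h -> h) :
  (forall i, Q i -> Pm n (G i)) -> Pm n (fun x y => \sum_(i <- r | Q i) G i x y).
Proof.
move=> H; elim: r => [|i r IH].
  by apply: P_ext (P_zero n) => x y; rewrite big_nil.
case Qi: (Q i).
  by apply: P_ext (P_add (H i Qi) IH) => x y; rewrite big_cons Qi.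
by apply: P_ext IH => x y; rewrite big_cons Qi.
Qed.

Lemma P_id : Pm 0 (fun _ y => y).
Proof.
exists (fun _ y => y); split => //.
- by split=> [y t []|].
- by move=> x xs y; rewrite big_ord0 add0r.
Qed.

Lemma P_ad : Pm 1 (fun x y => br x y).
Proof.
exists (fun xs y => br (xs ord0) y); split => //.
- split.
  + by move=> y t i a u v; rewrite /upd (ord1 i) eqxx brDZl.
  + by move=> xs a u v; rewrite brDZr.
- move=> x xs y; rewrite big_ord1 /upd eqxx brJ //.
Qed.

Lemma P_B m (B : ('I_m -> h) -> h) :
  is_multilinear B -> is_invariant br B -> Pm m (fun x y => br (B (cst m x)) y).
Proof.
move=> BM BI; exists (fun xs y => br (B xs) y); split => //.
- split.
  + by move=> y t i a u v; rewrite BM brDZl.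
  + by move=> xs a u v; rewrite brDZr.
- by move=> x xs y; rewrite brJ BI brsuml.
Qed.

Lemma upd_lshift p q (t : 'I_(p + q) -> h) (j : 'I_p) u :
  (fun k => upd t (lshift q j) u (lshift q k)) = upd (fun k => t (lshift q k)) j u.
Proof.
by apply: functional_extensionality => k; rewrite /upd (eq_shift.1.1.1).
Qed.
Lemma upd_lshiftR p q (t : 'I_(p + q) -> h) (j : 'I_p) u :
  (fun k => upd t (lshift q j) u (rshift p k)) = (fun k => t (rshift p k)).
Proof.
by apply: functional_extensionality => k; rewrite /upd eq_rlshift.
Qed.
Lemma upd_rshift p q (t : 'I_(p + q) -> h) (j : 'I_q) u :
  (fun k => upd t (rshift p j) u (rshift p k)) = upd (fun k => t (rshift p k)) j u.
Proof.
by apply: functional_extensionality => k; rewrite /upd (eq_shift.1.1.2).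
Qed.
Lemma upd_rshiftL p q (t : 'I_(p + q) -> h) (j : 'I_q) u :
  (fun k => upd t (rshift p j) u (lshift q k)) = (fun k => t (lshift q k)).
Proof.
by apply: functional_extensionality => k; rewrite /upd eq_lrshift.
Qed.

Lemma P_comp p q g1 g2 : Pm p g1 -> Pm q g2 -> Pm (p + q) (fun x y => g1 x (g2 x y)).
Proof.
move=> [D [[D1a D1b] D2 D3]] [E [[E1a E1b] E2 E3]].
have Dl : forall xs, islin (D xs) by move=> xs a u v; apply: D1b.
exists (fun xs y => D (fun k => xs (lshift q k)) (E (fun k => xs (rshift p k)) y)); split.
- split.
  + move=> y t i a u v /=; rewrite -(splitK i); case: (split i) => j /=.
      by rewrite !upd_lshift !upd_lshiftR D1a.
    by rewrite !upd_rshift !upd_rshiftL E1a D1b.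
  + by move=> xs a u v; rewrite E1b D1b.
- move=> x xs y; rewrite D2 E2 linD // linS // big_split_ord -!addrA; congr (_ + _).
    by apply: eq_bigr => j _; rewrite upd_lshift upd_lshiftR.
  congr (_ + _); apply: eq_bigr => j _; by rewrite upd_rshift upd_rshiftL.
- by move=> x y; rewrite D3 E3.
Qed.

Lemma P_cast n n' g : n = n' -> Pm n g -> Pm n' g.
Proof. by move=> ->. Qed.

Lemma upd_comp n (t : 'I_n -> h) (s : 'S_n) i u :
  (upd t i u \o s) = upd (t \o s) (s^-1 i)%g u.
Proof.
apply: functional_extensionality => j; rewrite /upd /=.
have -> : (s j == i) = (j == (s^-1)%g i).
  by rewrite -(inj_eq (@perm_inj _ (s^-1)%g)) -permM mulgV perm1.
by [].
Qed.

Lemma P_sym n g : Pm n g -> exists D : ('I_n -> h) -> h -> h,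
  [/\ is_multilinear1 D, is_invariant1 br D, is_symmetric1 D & forall x y, g x y = D (cst n x) y].
Proof.
move=> [D [[D1a D1b] D2 D3]].
have Dl : forall xs, islin (D xs) by move=> xs a u v; apply: D1b.
pose c : R := (n`!%:R)^-1.
exists (fun xs y => c *: \sum_(s : 'S_n) D (xs \o s) y); split.
- split.
  + move=> y t i a u v /=.
    rewrite scalerA mulrC -scalerA -scalerDr; congr (_ *: _).
    rewrite scaler_sumr -big_split; apply: eq_bigr => s _ /=.
    by rewrite !upd_comp D1a.
  + move=> xs a u v.
    rewrite scalerA mulrC -scalerA -scalerDr; congr (_ *: _).
    rewrite scaler_sumr -big_split; apply: eq_bigr => s _ /=.
    by rewrite D1b.
- move=> x xs y.
  rewrite linZ; last exact: (brr_lin x).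
  rewrite linS; last exact: (brr_lin x).
  rewrite -[X in _ = X + _]scaler_sumr -scalerDr; congr (_ *: _).
  rewrite exchange_big -big_split; apply: eq_bigr => s _ /=.
  rewrite D2; congr (_ + _).
  rewrite (reindex_inj (@perm_inj _ (s^-1)%g)) /=; apply: eq_bigr => j _.
  by rewrite upd_comp permKV.
- move=> y xs t /=; congr (_ *: _).
  rewrite [RHS](reindex_inj (mulIg t)) /=; apply: eq_bigr => s _.
  by congr (D _ y); apply: functional_extensionality => j /=; rewrite permM.
- move=> x y; rewrite D3.
  rewrite (eq_bigr (fun _ => D (cst n x) y)) // sumr_const card_Sn -scaler_nat scalerA.
  by rewrite /c mulVf ?scale1r // pnatr_eq0 -lt0n fact_gt0.
Qed.
End P3.
Section P4.
Variables (R : realType) (h : vectType R) (br : h -> h -> h).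
Hypothesis HL : left_leibniz br.

Local Notation brDl := (brDl HL).
Local Notation brDr := (brDr HL).
Local Notation brZl := (brZl HL).
Local Notation brZr := (brZr HL).
Local Notation brsuml := (brsuml HL).
Local Notation brsumr := (brsumr HL).
Local Notation br0l := (br0l HL).
Local Notation br0r := (br0r HL).

Lemma tri (f : nat -> nat -> h) n :
  \sum_(0 <= r < n.+1) \sum_(0 <= j < (n - r)%N.+1) f r j =
  \sum_(0 <= a < n.+1) \sum_(0 <= r < a.+1) f r (a - r)%N.
Proof.
elim: n => [|n IH]; first by rewrite !big_nat1.
rewrite big_nat_recr //= subnn big_nat1 [RHS]big_nat_recr //= -IH.
rewrite [X in _ = _ + X]big_nat_recr //= subnn addrA; congr (_ + _).
rewrite -big_split /=; apply: eq_big_nat => r /andP [_ rn].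
by rewrite subSn // big_nat_recr.
Qed.

Lemma tri_swap (f : nat -> nat -> h) n :
  \sum_(0 <= r < n.+1) \sum_(0 <= j < (n - r)%N.+1) f r j =
  \sum_(0 <= j < n.+1) \sum_(0 <= r < (n - j)%N.+1) f r j.
Proof.
rewrite tri (tri (fun j r => f r j)); apply: eq_big_nat => a /andP [_ an].
rewrite big_nat_rev /=; apply: eq_big_nat => j /andP [_ ja].
by rewrite add0n subSS subKn.
Qed.

Definition sbr (u v : nat -> h) : nat -> h :=
  fun n => \sum_(0 <= r < n.+1) br (u r) (v (n - r)%N).

Lemma sbr_jacobi u v w n :
  sbr u (sbr v w) n = sbr (sbr u v) w n + sbr v (sbr u w) n.
Proof.
rewrite /sbr.
under eq_bigr do rewrite brsumr.
under eq_bigr do under eq_bigr do rewrite (brJ HL).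
under eq_bigr do rewrite big_split /=.
rewrite big_split /=; congr (_ + _).
  rewrite tri; apply: eq_big_nat => a /andP [_ an].
  rewrite brsuml; apply: eq_big_nat => r /andP [_ ra].
  by rewrite -subnDA subnKC.
rewrite tri_swap; apply: eq_big_nat => j /andP [_ jn].
rewrite brsumr; apply: eq_big_nat => r /andP [_ rj].
by rewrite subnAC.
Qed.

Definition Dop (Y u : nat -> h) := sbr Y u.

Lemma Dop_lin Y (a : R) u v n :
  Dop Y (fun m => a *: u m + v m) n = a *: Dop Y u n + Dop Y v n.
Proof.
rewrite /Dop /sbr scaler_sumr -big_split; apply: eq_bigr => r _.
by rewrite brDr brZr.
Qed.
Lemma Dop_scale Y (a : R) u n : Dop Y (fun m => a *: u m) n = a *: Dop Y u n.
Proof. by rewrite /Dop /sbr scaler_sumr; apply: eq_bigr => r _; rewrite brZr. Qed.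
Lemma Dop_sum Y I (s : seq I) (F : I -> nat -> h) n :
  Dop Y (fun m => \sum_(i <- s) F i m) n = \sum_(i <- s) Dop Y (F i) n.
Proof.
rewrite /Dop /sbr exchange_big /=; apply: eq_bigr => r _; by rewrite brsumr.
Qed.

Lemma sbr_scalel (a : R) u v n : sbr (fun m => a *: u m) v n = a *: sbr u v n.
Proof. by rewrite /sbr scaler_sumr; apply: eq_bigr => r _; rewrite brZl. Qed.
Lemma sbr_scaler (a : R) u v n : sbr u (fun m => a *: v m) n = a *: sbr u v n.
Proof. by rewrite /sbr scaler_sumr; apply: eq_bigr => r _; rewrite brZr. Qed.

Definition Pk (Y : nat -> h) k u : nat -> h :=
  fun n => (k`!%:R)^-1 *: iter k (Dop Y) u n.

Lemma Pk0 Y u : Pk Y 0 u = u.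
Proof. by apply: functional_extensionality => n; rewrite /Pk /= invr1 scale1r. Qed.

Lemma fact_neq0 k : (k`!%:R : R) != 0.
Proof. by rewrite pnatr_eq0 -lt0n fact_gt0. Qed.

Lemma DPk Y k u n : Dop Y (Pk Y k u) n = k.+1%:R *: Pk Y k.+1 u n.
Proof.
rewrite /Pk Dop_scale scalerA /=; congr (_ *: _).
rewrite factS natrM invfM mulrA mulfV ?mul1r //.
by rewrite pnatr_eq0.
Qed.

Lemma PkS Y k u n : Pk Y k.+1 u n = (k.+1%:R)^-1 *: Dop Y (Pk Y k u) n.
Proof.
by rewrite DPk scalerA mulVf ?scale1r // pnatr_eq0.
Qed.

Lemma Pk_leib Y u v k n :
  Pk Y k (sbr u v) n = \sum_(0 <= i < k.+1) sbr (Pk Y i u) (Pk Y (k - i)%N v) n.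
Proof.
elim: k n => [|k IH] n.
  by rewrite big_nat1 !Pk0.
rewrite PkS.
have -> : Pk Y k (sbr u v) = fun m => \sum_(0 <= i < k.+1) sbr (Pk Y i u) (Pk Y (k - i)%N v) m.
  by apply: functional_extensionality => m; rewrite IH.
rewrite Dop_sum.
under eq_bigr do rewrite /Dop sbr_jacobi.
pose T i := sbr (Pk Y i u) (Pk Y (k.+1 - i)%N v) n.
have E1 : forall i, (i <= k)%N -> sbr (sbr Y (Pk Y i u)) (Pk Y (k - i)%N v) n = i.+1%:R *: T i.+1.
  move=> i ik; rewrite /T subSS -sbr_scalel; congr (sbr _ _ n).
  by apply: functional_extensionality => m; rewrite -DPk.
have E2 : forall i, (i <= k)%N -> sbr (Pk Y i u) (sbr Y (Pk Y (k - i)%N v)) n = (k.+1 - i)%N%:R *: T i.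
  move=> i ik; rewrite /T subSn // -sbr_scaler; congr (sbr _ _ n).
  by apply: functional_extensionality => m; rewrite -DPk.
rewrite (eq_big_nat _ _ (F2 := fun i => i.+1%:R *: T i.+1 + (k.+1 - i)%N%:R *: T i)); last first.
  by move=> i /andP [_ ik]; rewrite E1 // E2.
rewrite big_split /=.
have -> : \sum_(0 <= i < k.+1) i.+1%:R *: T i.+1 = \sum_(0 <= i < k.+2) i%:R *: T i.
  by rewrite [RHS]big_nat_recl //= scale0r add0r.
have -> : \sum_(0 <= i < k.+1) (k.+1 - i)%N%:R *: T i = \sum_(0 <= i < k.+2) (k.+1 - i)%N%:R *: T i.
  by rewrite [RHS]big_nat_recr //= subnn scale0r addr0.
rewrite -big_split /= scaler_sumr; apply: eq_big_nat => i /andP [_ ik].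
rewrite -scalerDl -natrD subnKC // scalerA mulVf ?scale1r //.
by rewrite pnatr_eq0.
Qed.

Lemma iter_vanish Y u : Y 0%N = 0 -> forall k n, (n < k)%N -> iter k (Dop Y) u n = 0.
Proof.
move=> Y0; elim=> [|k IH] n // nk.
rewrite iterS /Dop /sbr big1_seq // => r; rewrite mem_iota add0n => /andP [_ rn].
case: r rn => [|r] rn; first by rewrite Y0 br0l.
by rewrite IH ?br0r //; lia.
Qed.

Lemma Pk_vanish Y u : Y 0%N = 0 -> forall k n, (n < k)%N -> Pk Y k u n = 0.
Proof. by move=> Y0 k n nk; rewrite /Pk iter_vanish // scaler0. Qed.

Definition Eop (Y u : nat -> h) : nat -> h :=
  fun n => \sum_(0 <= k < n.+1) Pk Y k u n.

Lemma ext_sum (F : nat -> h) a n : (a <= n)%N -> (forall i, (a < i)%N -> F i = 0) ->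
  \sum_(0 <= i < a.+1) F i = \sum_(0 <= i < n.+1) F i.
Proof.
move=> an F0; rewrite [RHS](big_cat_nat _ (n := a.+1)) //= [X in _ = _ + X]big1_seq ?addr0 //.
by move=> i /andP [_]; rewrite mem_iota subnKC // => /andP [ai _]; apply: F0.
Qed.

Lemma Eop_mult Y u v : Y 0%N = 0 -> forall n, Eop Y (sbr u v) n = sbr (Eop Y u) (Eop Y v) n.
Proof.
move=> Y0 n; rewrite /Eop.
under eq_bigr do rewrite Pk_leib.
pose G i j := sbr (Pk Y i u) (Pk Y j v) n.
rewrite -(tri G).
have -> : \sum_(0 <= r < n.+1) \sum_(0 <= j < (n - r)%N.+1) G r j =
          \sum_(0 <= r < n.+1) \sum_(0 <= j < n.+1) G r j.
  apply: eq_big_nat => i /andP [_ i_n]; apply: ext_sum; first exact: leq_subr.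
  move=> j ij; rewrite /G /sbr big1_seq // => r; rewrite mem_iota add0n => /andP [_ rn].
  case: (ltnP r i) => ri; first by rewrite Pk_vanish // br0l.
  rewrite [Pk Y j v _]Pk_vanish ?br0r //; lia.
rewrite /G /sbr.
rewrite [RHS](eq_big_nat _ _ (F2 := fun r => \sum_(0 <= i < n.+1) \sum_(0 <= j < n.+1)
            br (Pk Y i u r) (Pk Y j v (n - r)%N))); last first.
  move=> r /andP [_ rn].
  rewrite (ext_sum (F := fun i => Pk Y i u r) (a := r) (n := n)) //; last by move=> i ir; rewrite Pk_vanish.
  rewrite brsuml; apply: eq_bigr => i _; rewrite brsumr.
  rewrite (ext_sum (F := fun j => br (Pk Y i u r) (Pk Y j v (n - r)%N)) (a := (n - r)%N) (n := n)) ?leq_subr //.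
  by move=> j jr; rewrite [Pk Y j _ _]Pk_vanish ?br0r.
under eq_bigr do rewrite exchange_big /=.
rewrite [LHS]exchange_big /=.
under eq_bigr do rewrite exchange_big /=.
by rewrite [LHS]exchange_big.
Qed.
End P4.
Section P5.
Variables (R : realType) (h : vectType R) (br : h -> h -> h).
Hypothesis HL : left_leibniz br.

Local Notation brsuml := (brsuml HL).
Local Notation brsumr := (brsumr HL).
Local Notation br0l := (br0l HL).
Local Notation br0r := (br0r HL).
Local Notation sbr := (sbr br).
Local Notation Dop := (Dop br).
Local Notation Pk := (Pk br).
Local Notation Eop := (Eop br).

Lemma foldr_cst x y (T : Type) (s : seq T) :
  foldr (fun _ acc => br x acc) y s = iter (size s) (br x) y.
Proof. by elim: s => //= a s ->. Qed.

Lemma A0_cst m x y : A0 br m (cst m x) y = (m`!%:R)^-1 *: iter m (br x) y.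
Proof.
rewrite /A0 /cst.
rewrite (eq_bigr (fun _ => iter m (br x) y)); last by move=> s _; rewrite foldr_cst size_enum_ord.
rewrite sumr_const card_Sn -scaler_nat scalerA natrX expr2 invfM -mulrA mulVf ?mulr1 //.
exact: fact_neq0.
Qed.

Definition delta (y : h) : nat -> h := fun n => if n is 0%N then y else 0.
Definition Xs (x : h) : nat -> h := fun n => if n == 1%N then x else 0.
Definition Yb (b : nat -> h) : nat -> h := fun n => if (2 <= n)%N then b n else 0.

Lemma DopX x w n : Dop (Xs x) w n = if n is n'.+1 then br x (w n') else 0.
Proof.
rewrite /Dop /sbr; case: n => [|n]; first by rewrite big_nat1 /Xs /= br0l.
rewrite big_nat_recl // /Xs /= br0l add0r big_nat_recl // /= subn1 /= big1_seq ?addr0 //.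
by move=> i _; rewrite br0l.
Qed.

Lemma iterX x y k n : iter k (Dop (Xs x)) (delta y) n = if n == k then iter k (br x) y else 0.
Proof.
elim: k n => [|k IH] n /=; first by case: n.
rewrite DopX; case: n => [|n] //=; rewrite IH eqSS.
by case: (n == k) => //; rewrite br0r.
Qed.

Lemma EopX x y n : Eop (Xs x) (delta y) n = A0 br n (cst n x) y.
Proof.
rewrite /Eop big_nat_recr //= big1_seq ?add0r.
  by rewrite /Pk iterX eqxx A0_cst.
move=> k; rewrite mem_iota => kn.
by rewrite /Pk iterX; case: eqP => [E|_]; [lia | rewrite scaler0].
Qed.

Definition fcons (T : finType) k (t : T) (l : {ffun 'I_k -> T}) : {ffun 'I_k.+1 -> T} :=
  [ffun i => if unlift ord0 i is Some j then l j else t].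

Lemma big_ffunS (T : finType) k (P : pred {ffun 'I_k.+1 -> T}) (F : {ffun 'I_k.+1 -> T} -> h) :
  \sum_(l | P l) F l = \sum_(t : T) \sum_(l : {ffun 'I_k -> T} | P (fcons t l)) F (fcons t l).
Proof.
rewrite big_mkcond /=.
under [RHS]eq_bigr do rewrite big_mkcond /=.
rewrite pair_big /=.
rewrite (reindex (fun p : T * {ffun 'I_k -> T} => fcons p.1 p.2)) //.
apply: onW_bij.
exists (fun l : {ffun 'I_k.+1 -> T} => (l ord0, [ffun j => l (lift ord0 j)])).
  move=> [t l] /=; congr (_, _); first by rewrite ffunE unlift_none.
  by apply/ffunP => j; rewrite !ffunE liftK.
move=> l; apply/ffunP => i; rewrite ffunE /=.
by case: unliftP => [j ->|->]; rewrite ?ffunE.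
Qed.

Lemma fcons0 (T : finType) k t (l : {ffun 'I_k -> T}) : fcons t l ord0 = t.
Proof. by rewrite ffunE unlift_none. Qed.
Lemma fconsS (T : finType) k t (l : {ffun 'I_k -> T}) j : fcons t l (lift ord0 j) = l j.
Proof. by rewrite ffunE liftK. Qed.

Lemma sum_fcons N k (t : 'I_N) (l : {ffun 'I_k -> 'I_N}) :
  (\sum_(i < k.+1) (fcons t l i : nat))%N = (t + \sum_(i < k) (l i : nat))%N.
Proof.
rewrite big_ord_recl fcons0; congr (_ + _)%N; apply: eq_bigr => i _; by rewrite fconsS.
Qed.

Lemma forall_fcons N k (t : 'I_N) (l : {ffun 'I_k -> 'I_N}) :
  [forall i, (2 <= fcons t l i)%N] = (2 <= t)%N && [forall j, (2 <= l j)%N].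
Proof.
apply/forallP/andP => [H|[Ht /forallP Hl] i].
  split; first by have := H ord0; rewrite fcons0.
  by apply/forallP => j; have := H (lift ord0 j); rewrite fconsS.
by case: (unliftP ord0 i) => [j ->|->]; rewrite ?fconsS ?fcons0.
Qed.

Lemma foldr_fcons N k (t : 'I_N) (l : {ffun 'I_k -> 'I_N}) (b : nat -> h) w :
  foldr (fun i acc => br (b (fcons t l i)) acc) w (enum 'I_k.+1) =
  br (b t) (foldr (fun i acc => br (b (l i)) acc) w (enum 'I_k)).
Proof.
rewrite enum_ordSl /= foldr_map fcons0; congr (br _ _).
by elim: (enum 'I_k) => //= a s ->; rewrite fconsS.
Qed.

Lemma sum_ffun0 (T : finType) (P : pred {ffun 'I_0 -> T}) (F : {ffun 'I_0 -> T} -> h) c :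
  (forall l, P l) -> (forall l, F l = c) -> \sum_(l | P l) F l = c.
Proof.
move=> HP HF; rewrite (eq_bigl predT) // (eq_bigr (fun _ => c)) //.
by rewrite sumr_const card_ffun card_ord expn0.
Qed.

Lemma widen_sum n N (F : nat -> h) : (n <= N)%N ->
  \sum_(0 <= r < n.+1) F r = \sum_(t < N.+1) (if (t < n.+1)%N then F t else 0).
Proof. by move=> nN; rewrite big_mkord (big_ord_widen N.+1) // big_mkcond. Qed.

Definition Cond n k (l : {ffun 'I_k -> 'I_n}) (m : nat) :=
  [forall i, (2 <= l i)%N] && (\sum_(i < k) (l i : nat) <= m)%N.

Lemma iterY (b : nat -> h) (W : nat -> h) k : forall N n, (n <= N)%N ->
  iter k (Dop (Yb b)) W n =
  \sum_(l : {ffun 'I_k -> 'I_N.+1} | Cond l n)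
     foldr (fun i acc => br (b (l i)) acc) (W (n - \sum_(i < k) (l i : nat))%N) (enum 'I_k).
Proof.
elim: k => [|k IH] N n nN.
  symmetry; apply: sum_ffun0 => [l|l]; first by rewrite /Cond big_ord0; apply/andP; split => //; apply/forallP => [[]].
  by rewrite enum_ord0 big_ord0 /= subn0.
rewrite iterS {1}/Dop /sbr.
rewrite (eq_big_nat _ _ (F2 := fun r => br (Yb b r) (\sum_(l : {ffun 'I_k -> 'I_N.+1} | Cond l (n - r)%N)
     foldr (fun i acc => br (b (l i)) acc) (W (n - r - \sum_(i < k) (l i : nat))%N) (enum 'I_k)))); last first.
  by move=> r /andP [_ rn]; rewrite (IH N) //; apply: leq_trans nN; apply: leq_subr.
rewrite big_ffunS (widen_sum _ nN).
apply: eq_bigr => t _.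
rewrite /Cond.
symmetry.
under eq_bigl do rewrite forall_fcons sum_fcons.
under eq_bigr do rewrite sum_fcons foldr_fcons.
case: (ltnP t n.+1) => tn.
  rewrite /Yb; case: (ltnP 1 t) => t2; last first.
    by rewrite br0l big_pred0 // => l; rewrite (leqNgt 2) ltnS t2.
  rewrite brsumr; apply: eq_big => [l|l _].
    rewrite /= ; congr (_ && _); apply/idP/idP; lia.
  by rewrite subnDA.
rewrite big_pred0 // => l; apply/negP => /andP [_]; lia.
Qed.
End P5.
Section P6.
Variables (R : realType) (h : vectType R) (br : h -> h -> h).
Hypothesis HL : left_leibniz br.

Local Notation brsuml := (brsuml HL).
Local Notation brsumr := (brsumr HL).
Local Notation br0l := (br0l HL).
Local Notation br0r := (br0r HL).
Local Notation sbr := (sbr br).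
Local Notation Dop := (Dop br).
Local Notation Pk := (Pk br).
Local Notation Eop := (Eop br).

Lemma foldr_ext (T : Type) (f g : T -> h -> h) w s :
  (forall i a, f i a = g i a) -> foldr f w s = foldr g w s.
Proof. by move=> E; elim: s => //= a s ->; rewrite E. Qed.

Lemma A0_0 xs w : A0 br 0 xs w = w.
Proof.
rewrite /A0 (eq_bigr (fun _ => w)) //; last by move=> s _; rewrite enum_ord0.
by rewrite sumr_const card_Sn /= invr1 scale1r.
Qed.

Lemma A0_1 xs w : A0 br 1 xs w = br (xs ord0) w.
Proof.
rewrite /A0 (eq_bigr (fun _ => br (xs ord0) w)) //; last first.
  by move=> s _; rewrite enum_ordSl enum_ord0 /= (ord1 (s ord0)).
by rewrite sumr_const card_Sn /= invr1 !scale1r.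
Qed.

Lemma A0_sum n k (b : nat -> h) (W : nat -> h) :
  \sum_(l : {ffun 'I_k -> 'I_n.+1} | Cond l n) A0 br k (fun i => b (l i)) (W (n - \sum_(i < k) (l i : nat))%N) =
  (k`!%:R)^-1 *: \sum_(l : {ffun 'I_k -> 'I_n.+1} | Cond l n)
      foldr (fun i acc => br (b (l i)) acc) (W (n - \sum_(i < k) (l i : nat))%N) (enum 'I_k).
Proof.
rewrite /A0 -scaler_sumr exchange_big /=.
rewrite (eq_bigr (fun _ => \sum_(l : {ffun 'I_k -> 'I_n.+1} | Cond l n)
      foldr (fun i acc => br (b (l i)) acc) (W (n - \sum_(i < k) (l i : nat))%N) (enum 'I_k))).
  rewrite sumr_const card_Sn -scaler_nat scalerA natrX expr2 invfM -mulrA mulVf ?mulr1 //.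
  exact: fact_neq0.
move=> s _.
pose hs := fun l : {ffun 'I_k -> 'I_n.+1} => ([ffun i => l (s i)] : {ffun 'I_k -> 'I_n.+1}).
have hinj : injective hs.
  move=> l1 l2 E; apply/ffunP => i; have := congr1 (fun l : {ffun 'I_k -> 'I_n.+1} => l ((s^-1)%g i)) E.
  by rewrite /hs !ffunE permKV.
have hsum : forall l, (\sum_(i < k) (hs l i : nat))%N = (\sum_(i < k) (l i : nat))%N.
  move=> l; rewrite [RHS](reindex_inj (@perm_inj _ s)); apply: eq_bigr => i _; by rewrite ffunE.
rewrite [RHS](reindex_inj hinj); apply: eq_big => [l|l _].
  rewrite /Cond hsum; congr (_ && _).
  apply/forallP/forallP => H i; first by rewrite /hs ffunE; apply: H.
  by have := H ((s^-1)%g i); rewrite /hs ffunE permKV.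
rewrite hsum; apply: foldr_ext => i a; by rewrite ffunE.
Qed.

Definition RHS (b : nat -> h) (x y : h) (n : nat) : h :=
  A0 br n (cst n x) y +
  \sum_(1 <= k < (n./2).+1)
    \sum_(l : {ffun 'I_k -> 'I_n.+1} |
            [forall i, (2 <= l i)%N] && ((\sum_(i < k) (l i : nat))%N <= n)%N)
      A0 br k (fun i : 'I_k => b (l i))
        (A0 br (n - \sum_(i < k) (l i : nat))%N (cst (n - \sum_(i < k) (l i : nat))%N x) y).

Lemma Cond_big n k (l : {ffun 'I_k -> 'I_n.+1}) : (n./2 < k)%N -> Cond l n = false.
Proof.
move=> nk; apply/negP => /andP [/forallP H2 Hs].
have : (\sum_(i < k) 2 <= \sum_(i < k) (l i : nat))%N by apply: leq_sum => i _; apply: H2.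
rewrite sum_nat_const card_ord; move: nk; rewrite ltn_half_double; lia.
Qed.

Lemma RHS_eq b x y n : RHS b x y n = Eop (Yb b) (Eop (Xs x) (delta y)) n.
Proof.
have WE := EopX HL x y.
set W := Eop (Xs x) (delta y).
have T_eq : forall k, Pk (Yb b) k W n =
   \sum_(l : {ffun 'I_k -> 'I_n.+1} | Cond l n) A0 br k (fun i => b (l i)) (W (n - \sum_(i < k) (l i : nat))%N).
  by move=> k; rewrite A0_sum /Pk (iterY HL _ _ _ (leqnn n)).
rewrite /Eop /RHS; symmetry.
under eq_bigr do rewrite T_eq.
rewrite (big_cat_nat _ (n := 1)) //= big_nat1.
rewrite (big_cat_nat _ (n := (n./2).+1) (p := n.+1)) //=; last by rewrite ltnS leq_half_double -addnn; lia.
rewrite [X in _ + (_ + X) = _]big1_seq ?addr0; last first.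
  move=> k /andP [_]; rewrite mem_index_iota => /andP [nk _]; rewrite big_pred0 // => l.
  by apply: Cond_big.
congr (_ + _).
  rewrite (@sum_ffun0 _ _ _ _ _ (W n)) //.
    by move=> l; rewrite /Cond big_ord0; apply/andP; split => //; apply/forallP => [[]].
  by move=> l; rewrite A0_0 big_ord0 subn0.
apply: eq_bigr => k _; apply: eq_bigr => l _; by rewrite /W WE.
Qed.
End P6.
Section P7.
Variables (R : realType) (h : vectType R) (br : h -> h -> h).
Hypothesis HL : left_leibniz br.

Local Notation br0l := (br0l HL).
Local Notation br0r := (br0r HL).
Local Notation sbr := (sbr br).
Local Notation Eop := (Eop br).
Local Notation RHS := (RHS br).

Lemma delta_br y z : delta (br y z) = sbr (delta y) (delta z).
Proof.
apply: functional_extensionality => n; rewrite /sbr.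
case: n => [|n]; first by rewrite big_nat1.
rewrite big_nat_recl //= br0r add0r big1_seq //= => r _; by rewrite br0l.
Qed.

Lemma RHS_mult b x y z n :
  RHS b x (br y z) n = \sum_(0 <= r < n.+1) br (RHS b x y r) (RHS b x z (n - r)%N).
Proof.
rewrite !(RHS_eq HL) delta_br.
have -> : Eop (Xs x) (sbr (delta y) (delta z)) = sbr (Eop (Xs x) (delta y)) (Eop (Xs x) (delta z)).
  by apply: functional_extensionality => m; rewrite (Eop_mult HL).
rewrite (Eop_mult HL) //; apply: eq_bigr => r _; by rewrite !(RHS_eq HL).
Qed.

Lemma RHS_local b b' x y n : (forall m, (2 <= m <= n)%N -> b m = b' m) ->
  RHS b x y n = RHS b' x y n.
Proof.
move=> E; rewrite /RHS; congr (_ + _); apply: eq_bigr => k _; apply: eq_bigr => l /andP [/forallP H _].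
congr (A0 br k _ _); apply: functional_extensionality => i; apply: E.
by rewrite H /= -ltnS.
Qed.

Lemma RHS_top b x y n : (2 <= n)%N ->
  RHS b x y n = RHS (fun m => if m == n then 0 else b m) x y n + br (b n) y.
Proof.
move=> n2; set b0 := fun m => if m == n then 0 else b m.
rewrite /RHS -addrA; congr (_ + _).
have n2' : (1 <= n./2)%N by rewrite half_gt0.
rewrite !big_nat_recl // addrAC; congr (_ + _).
  pose lN : {ffun 'I_1 -> 'I_n.+1} := [ffun _ => ord_max].
  have CN : [forall i, (2 <= lN i)%N] && (\sum_(i < 1) (lN i : nat) <= n)%N.
    by rewrite big_ord1 ffunE /=; apply/andP; split => //; apply/forallP => i; rewrite ffunE.
  rewrite (bigD1 lN CN) [X in _ = X + _](bigD1 lN CN) /=.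
  rewrite !big_ord1 !ffunE /= subnn !A0_1 !A0_0 /b0 !ffunE /= eqxx br0l add0r addrC; congr (_ + _).
  apply: eq_bigr => l /andP [_ nlN]; congr (A0 br 1 _ _).
  apply: functional_extensionality => i; rewrite /b0 (ord1 i).
  case: eqP => // E; exfalso; move/negP: nlN; apply; apply/eqP/ffunP => j.
  by rewrite (ord1 j) ffunE; apply: val_inj; rewrite /= E.
apply: eq_big_nat => k /andP [k1 kn].
apply: eq_bigr => l /andP [/forallP H2 Hs]; congr (A0 br k.+1 _ _).
apply: functional_extensionality => i; rewrite /b0.
case: (@eqP _ (l i : nat) n) => [E|_] //; exfalso.
pose j : 'I_k.+1 := if i == ord0 then ord_max else ord0.
have ji : j != i.
  rewrite /j; case: (i =P ord0) => [->|ne].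
    by apply/eqP => /(congr1 val) /=; lia.
  by apply/eqP => E0; apply: ne.
have : (l i + l j <= \sum_(i0 < k.+1) (l i0 : nat))%N.
  rewrite (bigD1 i) //= leq_add2l (bigD1 j) //=; first by rewrite leq_addr.
have := H2 j; rewrite E => lj2 H; move: (leq_trans H Hs).
by rewrite -[X in (_ <= X)%N]addn0 leq_add2l leqn0 => /eqP lj0; rewrite lj0 in lj2.
Qed.
End P7.
Section P8.
Variables (R : realType) (h : vectType R) (br : h -> h -> h).
Hypothesis HL : left_leibniz br.

Lemma P_foldr I (s : seq I) (f : I -> h -> h) (a : I -> nat) m g :
  (forall i, Pm br (a i) (fun x y => br (f i x) y)) -> Pm br m g ->
  Pm br (\sum_(i <- s) a i + m)%N (fun x y => foldr (fun i acc => br (f i x) acc) (g x y) s).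
Proof.
move=> Hf Hg; elim: s => [|i s IH]; first by rewrite big_nil.
rewrite big_cons -addnA; exact: (P_comp (Hf i) IH).
Qed.

Lemma P_A0 k (f : 'I_k -> h -> h) (a : 'I_k -> nat) m g :
  (forall i, Pm br (a i) (fun x y => br (f i x) y)) -> Pm br m g ->
  Pm br (\sum_(i < k) a i + m)%N (fun x y => A0 br k (fun i => f i x) (g x y)).
Proof.
move=> Hf Hg; rewrite /A0.
apply: (P_scale HL); apply: (P_sum HL) => s _.
have E : (\sum_(i <- enum 'I_k) a (s i) = \sum_(i < k) a i)%N.
  rewrite big_enum /=; symmetry; rewrite (reindex_inj (@perm_inj _ s)) //.
rewrite -E; exact: (P_foldr (enum 'I_k) (f := fun i => f (s i)) (a := fun i => a (s i))).
Qed.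

Lemma P_A0cst m : Pm br m (fun x y => A0 br m (cst m x) y).
Proof.
have := @P_A0 m (fun _ x => x) (fun _ => 1%N) 0 (fun _ y => y) (fun _ => @P_ad _ _ br HL) (@P_id _ _ br).
by rewrite sum_nat_const card_ord muln1 addn0.
Qed.

Lemma RHS_P n (bx : h -> nat -> h) :
  (forall m, (2 <= m <= n)%N -> Pm br m (fun x y => br (bx x m) y)) ->
  Pm br n (fun x y => RHS br (bx x) x y n).
Proof.
move=> Hb; rewrite /RHS; apply: (P_add HL); first exact: P_A0cst.
apply: (P_sum HL) => k _; apply: (P_sum HL) => l /andP [/forallP H2 Hs].
have := @P_A0 k (fun i x => bx x (l i)) (fun i => (l i : nat)) _ _
  (fun i => Hb (l i) _) (P_A0cst (n - \sum_(i < k) (l i : nat))%N).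
rewrite subnKC //; apply.
by move=> i; rewrite H2 /= -ltnS.
Qed.
End P8.

Local Unset Implicit Arguments.
Section Main.
Variables (R : realType) (h : vectType R) (br : h -> h -> h)
  (A : forall n : nat, ('I_n -> h) -> h -> h).
Hypotheses (HL : left_leibniz br) (H0 : H0_trivial br) (H1 : H1_trivial br)
  (HA0 : forall xs y, A 0%N xs y = y) (HA1 : forall xs y, A 1%N xs y = br (xs ord0) y)
  (HAn : forall n : nat, (2 <= n)%N ->
     [/\ is_multilinear1 (A n), is_invariant1 br (A n) & is_symmetric1 (A n)])
  (HAp : forall (p : nat) (x y z : h), (1 <= p)%N ->
     A p (cst p x) (br y z) =
       br y (A p (cst p x) z) + br (A p (cst p x) y) z +
       \sum_(1 <= r < p) br (A r (cst r x) y) (A (p - r)%N (cst (p - r) x) z)).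

Definition bof (B : forall n : nat, ('I_n -> h) -> h) (x : h) : nat -> h :=
  fun m => B m (cst m x).

Definition goodN (N : nat) (B : forall n : nat, ('I_n -> h) -> h) :=
  forall n, (2 <= n <= N)%N ->
    [/\ is_multilinear (B n), is_invariant br (B n), is_symmetric (B n) &
        forall x y, A n (cst n x) y = RHS br (bof B x) x y n].

Lemma goodN_mono N M B : (M <= N)%N -> goodN N B -> goodN M B.
Proof. by move=> MN G n /andP [n2 nM]; apply: G; rewrite n2 (leq_trans nM MN). Qed.

Lemma ad_inj c c' : (forall y, br c y = br c' y) -> c = c'.
Proof.
move=> E; apply/eqP; rewrite -subr_eq0; apply/eqP; apply: H0 => m.
by rewrite (brBl HL) E subrr.
Qed.

Lemma uniq_step N B B' n : goodN N B -> goodN N B' -> (2 <= n <= N)%N ->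
  (forall m, (2 <= m)%N -> (m < n)%N -> B m = B' m) -> B n = B' n.
Proof.
move=> GB GB' Hn IH; have /andP [n2 nN] := Hn.
have [BM BI BS BF] := GB n Hn.
have [BM' BI' BS' BF'] := GB' n Hn.
have diag : forall x, B n (cst n x) = B' n (cst n x).
  move=> x; apply: ad_inj => y.
  have := BF x y; rewrite BF' (RHS_top HL _ _ _ n2) (RHS_top HL (bof B x) _ _ n2).
  rewrite (RHS_local _ (b' := fun m => if m == n then 0 else bof B' x m)); last first.
    move=> m /andP [m2 mn]; case: eqP => // /eqP mn'.
    rewrite /bof (IH m) //.
    by rewrite ltn_neqAle mn' mn.
  by move/addrI.
apply: functional_extensionality => xs.
apply/eqP; rewrite -subr_eq0; apply/eqP; move: xs.
apply: (PV (F := fun xs => B n xs - B' n xs)).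
- move=> t i a u v; rewrite BM BM' scalerBr !opprD !addrA; congr (_ + _).
  by rewrite addrAC.
- by move=> t s; rewrite BS BS'.
- by move=> x; rewrite diag subrr.
Qed.

Lemma uniqN N B B' : goodN N B -> goodN N B' -> forall n, (2 <= n <= N)%N -> B n = B' n.
Proof.
move=> GB GB'.
suff: forall k n, (n < k)%N -> (2 <= n <= N)%N -> B n = B' n.
  by move=> S n Hn; apply: (S n.+1).
elim=> [|k IH] n // nk Hn.
apply: (uniq_step _ _ _ _ GB GB' Hn) => m m2 mn; apply: IH; first by apply: leq_trans mn _.
by rewrite m2 /=; case/andP: Hn => _; apply: leq_trans; apply: ltnW.
Qed.

Lemma abel4 (a b c d S : h) : a + b + S - (c + S + d) = a - c + (b - d).
Proof.
by rewrite !opprD !addrA [a + b + S - c]addrAC addrK [a + b - c]addrAC.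
Qed.

Lemma stepN N B : (1 <= N)%N -> goodN N B -> exists B', goodN N.+1 B'.
Proof.
move=> N1 GB.
set n := N.+1.
have n2 : (2 <= n)%N by rewrite /n ltnS.
pose bx := fun x m => if m == n then 0 else bof B x m.
have Hbx : forall m, (2 <= m <= n)%N -> Pm br m (fun x y => br (bx x m) y).
  move=> m /andP [m2 mn]; rewrite /bx; case: (eqVneq m n) => [->|ne].
    by apply: P_ext (@P_zero _ _ br HL n) => x y; rewrite ?eqxx (br0l HL).
  have mN : (m <= N)%N by rewrite -ltnS ltn_neqAle ne mn.
  have [BM BI _ _] := GB m (introT andP (conj m2 mN)).
  by apply: P_ext (P_B HL BM BI) => x y; rewrite ?(negbTE ne).
pose D := fun x y => A n (cst n x) y - RHS br (bx x) x y n.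
have PD : Pm br n D.
  apply: (P_sub HL); last exact: RHS_P.
  by have [AM AI _] := HAn n n2; exists (A n); split.
have [Dl [DM DI DS DE]] := P_sym HL PD.
have RHS0 : forall b x y, RHS br b x y 0 = y.
  by move=> b x y; rewrite /RHS big_geq // addr0 A0_0.
have Alow : forall r x y, (1 <= r)%N -> (r < n)%N -> A r (cst r x) y = RHS br (bx x) x y r.
  move=> r x y r1 rn; case: (ltnP 1 r) => r2.
    have rN : (r <= N)%N by [].
    have [_ _ _ BF] := GB r (introT andP (conj r2 rN)); rewrite BF.
    apply: RHS_local => m /andP [m2 mr]; rewrite /bx.
    have -> : (m == n) = false by apply/negbTE; rewrite neq_ltn (leq_ltn_trans mr rn).
    by [].
  have -> : r = 1%N by apply/eqP; rewrite eqn_leq r1 r2.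
  by rewrite HA1 /RHS big_geq // addr0 A0_1.
have Dder : forall x y z, D x (br y z) = br y (D x z) + br (D x y) z.
  move=> x y z; rewrite /D HAp // (RHS_mult HL).
  have Es : \sum_(1 <= r < n) br (A r (cst r x) y) (A (n - r)%N (cst (n - r)%N x) z) =
            \sum_(1 <= r < n) br (RHS br (bx x) x y r) (RHS br (bx x) x z (n - r)%N).
    apply: eq_big_nat => r /andP [r1 rn]; rewrite !Alow //; rewrite /n; lia.
  rewrite Es [in X in _ - X]big_ltn // [in X in _ - X]big_nat_recr //= subn0 subnn !RHS0 addrA.
  rewrite (brBr HL) (brBl HL).
  by rewrite abel4.
have DerAll : forall xs y z, Dl xs (br y z) = br y (Dl xs z) + br (Dl xs y) z.
  move=> xs y z; apply/eqP; rewrite -subr_eq0; apply/eqP; move: xs.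
  apply: (PV (F := fun xs => Dl xs (br y z) - (br y (Dl xs z) + br (Dl xs y) z))).
  - move=> t i a u v; rewrite !(DM.1 _ t i a u v) (brDZr HL) (brDZl HL).
    by rewrite scalerBr scalerDr addrACA opprD addrACA.
  - by move=> t s /=; rewrite !DS.
  - by move=> x /=; rewrite -!DE Dder subrr.
have Hex : forall xs, exists c, forall y, Dl xs y = br c y.
  by move=> xs; apply: H1 => [a u v|y z]; [exact: DM.2 | exact: DerAll].
pose Bn := fun xs => proj1_sig (constructive_indefinite_description _ (Hex xs)).
have BnE : forall xs y, Dl xs y = br (Bn xs) y.
  by move=> xs; exact: (proj2_sig (constructive_indefinite_description _ (Hex xs))).
pose B' := fun m (xs : 'I_m -> h) =>
  match @eqP _ n m with ReflectT e => Bn (fun i => xs (cast_ord e i)) | ReflectF _ => B m xs end.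
have B'n : B' n = Bn.
  apply: functional_extensionality => xs; rewrite /B'.
  case: (@eqP _ n n) => [e|ne]; last by exfalso; apply: ne.
  rewrite (eq_irrelevance e erefl); congr Bn; apply: functional_extensionality => i.
  by rewrite cast_ord_id.
have B'm : forall m, m != n -> B' m = B m.
  move=> m mn; apply: functional_extensionality => xs; rewrite /B'.
  by case: (@eqP _ n m) => // e; rewrite e eqxx in mn.
exists B'; move=> m /andP [m2 mN1].
case: (eqVneq m n) => [->|mn]; last first.
  have mN : (m <= N)%N by rewrite -ltnS ltn_neqAle mn mN1.
  rewrite B'm //.
  have [BM BI BS BF] := GB m (introT andP (conj m2 mN)); split => // x y.
  rewrite BF; apply: RHS_local => l /andP [l2 lm]; rewrite /bof B'm //.
  by rewrite neq_ltn (leq_ltn_trans lm) // ltnS.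
rewrite B'n; split.
- move=> t i a u v; apply: ad_inj => y; rewrite (brDZl HL) -!BnE; exact: (DM.1 y).
- move=> x t; apply: ad_inj => y.
  have J := brJ HL x (Bn t) y; rewrite -!BnE DI in J.
  rewrite (brsuml HL); under eq_bigr do rewrite -BnE.
  by apply: (@addIr _ (Dl t (br x y))); rewrite J.
- by move=> t s; apply: ad_inj => y; rewrite -!BnE; exact: DS.
- move=> x y; rewrite (RHS_top HL _ _ _ n2) /bof B'n -BnE -DE /D.
  rewrite (RHS_local _ (b' := bx x)); first by rewrite addrC subrK.
  move=> l /andP [l2 ln]; rewrite /bx; case: eqP => // /eqP ne.
  by rewrite B'm.
Qed.

Lemma exN N : exists B, goodN N B.
Proof.
elim: N => [|N [B GB]].
  by exists (fun _ _ => 0) => n /andP [n2 n0]; exfalso; lia.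
case: (posnP N) => [|Npos]; last exact: (stepN _ _ Npos GB).
by exists B => n /andP [n2 n1]; exfalso; lia.
Qed.

Lemma final : exists Bf : forall n : nat, ('I_n -> h) -> h,
  (forall n, (2 <= n)%N -> [/\ is_multilinear (Bf n), is_invariant br (Bf n) & is_symmetric (Bf n)]) /\
  (forall n x y, (2 <= n)%N -> A n (cst n x) y = RHS br (bof Bf x) x y n) /\
  (forall B' : forall n : nat, ('I_n -> h) -> h,
    (forall n, (2 <= n)%N -> [/\ is_multilinear (B' n), is_invariant br (B' n) & is_symmetric (B' n)]) ->
    (forall n x y, (2 <= n)%N -> A n (cst n x) y = RHS br (bof B' x) x y n) ->
    forall n, (2 <= n)%N -> B' n = Bf n).
Proof.
pose Bs := fun N => proj1_sig (constructive_indefinite_description _ (exN N)).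
have BsG : forall N, goodN N (Bs N).
  by move=> N; exact: (proj2_sig (constructive_indefinite_description _ (exN N))).
pose Bf := fun n => Bs n n.
have agree : forall N l, (2 <= l <= N)%N -> Bs N l = Bf l.
  move=> N l /andP [l2 lN].
  apply: (uniqN l (Bs N) (Bs l) (goodN_mono _ _ _ lN (BsG N)) (BsG l) l).
  by rewrite l2 leqnn.
exists Bf; split; [|split].
- move=> n n2; have [M I S _] := BsG n n (introT andP (conj n2 (leqnn n))).
  by rewrite /Bf; split.
- move=> n x y n2; have [_ _ _ F] := BsG n n (introT andP (conj n2 (leqnn n))).
  rewrite F; apply: RHS_local => l /andP [l2 ln]; by rewrite /bof agree // l2.
- move=> B' GB' FB' n n2.
  have G' : goodN n B'.
    move=> m /andP [m2 _]; have [M I S] := GB' m m2; split => // x y; exact: FB'.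
  rewrite (uniqN n B' (Bs n) G' (BsG n) n) //; by rewrite n2 leqnn.
Qed.
End Main.

Theorem theorem2 (R : realType) (h : vectType R) (br : h -> h -> h)
  (A : forall n : nat, ('I_n -> h) -> h -> h) :
  left_leibniz br -> H0_trivial br -> H1_trivial br ->
  (forall xs y, A 0%N xs y = y) ->
  (forall xs y, A 1%N xs y = br (xs ord0) y) ->
  (forall n : nat, (2 <= n)%N ->
     [/\ is_multilinear1 (A n), is_invariant1 br (A n) & is_symmetric1 (A n)]) ->
  (forall (p : nat) (x y z : h), (1 <= p)%N ->
     A p (cst p x) (br y z) =
       br y (A p (cst p x) z) + br (A p (cst p x) y) z +
       \sum_(1 <= r < p) br (A r (cst r x) y) (A (p - r)%N (cst (p - r) x) z)) ->
  let good (B : forall n : nat, ('I_n -> h) -> h) :=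
    (forall n : nat, (2 <= n)%N ->
       [/\ is_multilinear (B n), is_invariant br (B n) & is_symmetric (B n)]) /\
    (forall (n : nat) (x y : h), (2 <= n)%N ->
       A n (cst n x) y =
         A0 br n (cst n x) y +
         \sum_(1 <= k < (n./2).+1)
           \sum_(l : {ffun 'I_k -> 'I_n.+1} |
                   [forall i, (2 <= l i)%N] && ((\sum_(i < k) (l i : nat))%N <= n)%N)
             A0 br k (fun i : 'I_k => B (l i) (cst (l i) x))
                (A0 br (n - \sum_(i < k) (l i : nat))%N (cst (n - \sum_(i < k) (l i : nat))%N x) y)) in
  exists B : forall n : nat, ('I_n -> h) -> h,
    good B /\
    forall B' : forall n : nat, ('I_n -> h) -> h,
      good B' -> forall n : nat, (2 <= n)%N -> B' n = B n.
Proof.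
move=> HL H0 H1 HA0 HA1 HAn HAp good.
have [Bf [P1 [P2 P3]]] := final R h br A HL H0 H1 HA1 HAn HAp.
exists Bf; split.
  split; first exact: P1.
  move=> n x y n2; exact: (P2 n x y n2).
move=> B' [G1 G2] n n2; apply: P3 => // m x y m2; exact: (G2 m x y m2).
Qed.
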